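(* Let $n_u<n$, $n_b=n-n_u$, $\mathbf{A}\in\mathbb{R}^{n_u\times n_b}$ and $\mathbf{S}=\begin{bmatrix}\mathbf{A}\\ \mathbf{I}_{n_b}\end{bmatrix}\in\mathbb{R}^{n\times n_b}$. For $j=1,\dots,p$ ($p\ge2$) let $\mathbf{L}_j\in\{0,1\}^{n_j\times n}$ be selection matrices (rows are distinct rows of $\mathbf{I}_n$) such that every variable is selected by at least one $\mathbf{L}_j$; let $m=\sum_j n_j$ and $\mathbf{K}=[\mathbf{L}_1^\top\cdots\mathbf{L}_p^\top]^\top\in\{0,1\}^{m\times n}$. Suppose the base forecasts satisfy $\widehat{\mathbf{y}}=\mathbf{K}\mathbf{S}\mathbf{b}+\boldsymbol{\varepsilon}$, with $\mathbf{y}=\mathbf{S}\mathbf{b}$ the target vector, $\boldsymbol{\varepsilon}$ zero-mean with positive definite covariance $\mathbf{W}\in\mathbb{R}^{m\times m}$ (so the base forecasts are unbiased, $E(\widehat{\mathbf{y}})=\mathbf{K}E(\mathbf{y})$). Let $\mathbf{W}_c=(\mathbf{K}^\top\mathbf{W}^{-1}\mathbf{K})^{-1}$. Consider coherent linear combined forecasts of the form $\mathbf{S}\mathbf{G}\widehat{\mathbf{y}}$, $\mathbf{G}\in\mathbb{R}^{n_b\times m}$, subject to the unbiasedness constraint $\mathbf{G}\mathbf{K}\mathbf{S}=\mathbf{I}_{n_b}$, with error covariance $\mathbf{S}\mathbf{G}\mathbf{W}\mathbf{G}^\top\mathbf{S}^\top$. Then the MMSE coherent linear forecast combination, i.e.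 the one minimizing $\mathrm{tr}(\mathbf{S}\mathbf{G}\mathbf{W}\mathbf{G}^\top\mathbf{S}^\top)$ subject to $\mathbf{G}\mathbf{K}\mathbf{S}=\mathbf{I}_{n_b}$, is $$\widetilde{\mathbf{y}}^c=\mathbf{S}\mathbf{G}\widehat{\mathbf{y}},\qquad \mathbf{G}=(\mathbf{S}^\top\mathbf{W}_c^{-1}\mathbf{S})^{-1}\mathbf{S}^\top\mathbf{K}^\top\mathbf{W}^{-1}.$$
   Context: Structural representation of a linearly constrained multiple time series: $\mathbf{y}=[\mathbf{u}^\top\;\mathbf{b}^\top]^\top$ with upper (constrained) variables $\mathbf{u}=\mathbf{A}\mathbf{b}\in\mathbb{R}^{n_u}$ and free bottom variables $\mathbf{b}\in\mathbb{R}^{n_b}$, so that $\mathbf{y}=\mathbf{S}\mathbf{b}$. Expert $j$ provides forecasts $\widehat{\mathbf{y}}^j$ of $\mathbf{L}_j\mathbf{y}$, stacked into $\widehat{\mathbf{y}}=[\widehat{\mathbf{y}}^{1\top}\cdots\widehat{\mathbf{y}}^{p\top}]^\top$. *)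

(* Defs.v *)
From HB Require Import structures.
From mathcomp Require Import all_boot all_order all_algebra.
Set Implicit Arguments. Unset Strict Implicit. Unset Printing Implicit Defensive.
Import Order.TTheory GRing.Theory Num.Theory.
Local Open Scope ring_scope.

Definition selection_mx (R : ringType) (k n : nat) (L : 'M[R]_(k, n)) : Prop :=
  exists f : 'I_k -> 'I_n, injective f /\ L = \matrix_(i < k, c < n) ((f i == c)%:R).

Definition selects (R : ringType) (k n : nat) (L : 'M[R]_(k, n)) (c : 'I_n) : Prop :=
  exists i : 'I_k, L i c = 1.

Definition posdef (R : numDomainType) (m : nat) (W : 'M[R]_m) : Prop :=
  W^T = W /\ forall x : 'cV[R]_m, x != 0 -> 0 < (x^T *m W *m x) ord0 ord0.

Definition struct_mx (R : ringType) (nu nb : nat) (A : 'M[R]_(nu, nb)) : 'M[R]_(nu + nb, nb) :=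
  col_mx A 1%:M.

(* Main.v *)
Require Import Defs.
From HB Require Import structures.
From mathcomp Require Import all_boot all_order all_algebra.
Import Order.TTheory GRing.Theory Num.Theory.
Local Open Scope ring_scope.


Definition pdq {R : realFieldType} {n} (P : 'M[R]_n) :=
  forall x : 'cV_n, x != 0 -> 0 < (x^T *m P *m x) ord0 ord0.

Lemma pd_unit {R : realFieldType} {n} (P : 'M[R]_n) : pdq P -> P \in unitmx.
Proof.
move=> hP; rewrite unitmxE unitfE; apply/negP => /det0P [v v0 vP].
have := hP v^T; rewrite trmxK vP mul0mx mxE ltxx trmx_eq0; by move/(_ v0).
Qed.

Lemma pd_ge0 {R : realFieldType} {n} (P : 'M[R]_n) (x : 'cV[R]_n) : pdq P -> 0 <= (x^T *m P *m x) ord0 ord0.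
Proof.
move=> hP; have [->|x0] := eqVneq x 0; first by rewrite mulmx0 mxE.
exact/ltW/hP.
Qed.

Lemma pd_inv {R : realFieldType} {n} (P : 'M[R]_n) : P^T = P -> pdq P -> pdq (invmx P).
Proof.
move=> sP hP y y0; have uP := pd_unit _ hP.
set z := invmx P *m y.
have yz : y = P *m z by rewrite /z mulmxA mulmxV // mul1mx.
have z0 : z != 0 by apply: contraNneq y0 => e; rewrite yz e mulmx0.
have e : y^T *m invmx P *m y = (P *m z)^T *m z by rewrite -yz -mulmxA.
by rewrite e trmx_mul sP; apply: hP.
Qed.

Lemma pd_congr {R : realFieldType} {n} k (P : 'M[R]_n) (B : 'M[R]_(n, k)) :
  pdq P -> (forall x : 'cV[R]_k, B *m x = 0 -> x = 0) -> pdq (B^T *m P *m B).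
Proof.
move=> hP hB x x0.
have : B *m x != 0 by apply: contraNneq x0 => /hB ->.
move/hP; by rewrite trmx_mul !mulmxA.
Qed.

Lemma tr_quad {R : realFieldType} {n} k (P : 'M[R]_n) (X : 'M[R]_(k, n)) :
  pdq P -> 0 <= \tr (X *m P *m X^T) /\ (\tr (X *m P *m X^T) = 0 -> X = 0).
Proof.
move=> hP.
have E : \tr (X *m P *m X^T) = \sum_i (((row i X)^T)^T *m P *m (row i X)^T) ord0 ord0.
  rewrite /mxtrace; apply: eq_bigr => i _.
  rewrite trmxK -row_mul !mxE; apply: eq_bigr => l _; by rewrite !mxE.
rewrite E; split; first by apply: sumr_ge0 => i _; apply: pd_ge0.
move/psumr_eq0P => h; apply/row_matrixP => i; rewrite row0.
have /(_ isT) := h (fun i _ => pd_ge0 _ _ hP) i.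
apply: contra_eq => ri0; apply/lt0r_neq0/hP; by rewrite trmx_eq0.
Qed.

Theorem theorem2 (R : realFieldType) (nu nb p : nat) (A : 'M[R]_(nu, nb))
  (nj : 'I_p -> nat) (L : forall j : 'I_p, 'M[R]_(nj j, nu + nb))
  (W : 'M[R]_(\sum_(j < p) nj j)) :
  (0 < nb)%N -> (2 <= p)%N ->
  (forall j, selection_mx (L j)) ->
  (forall c : 'I_(nu + nb), exists j, selects (L j) c) ->
  posdef W ->
  let S := struct_mx A in
  let K := \mxcol_(j < p) L j in
  let Wc := invmx (K^T *m invmx W *m K) in
  let G0 := invmx (S^T *m invmx Wc *m S) *m S^T *m K^T *m invmx W in
  G0 *m K *m S = 1%:M /\
  forall G : 'M[R]_(nb, \sum_(j < p) nj j), G *m K *m S = 1%:M ->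
    \tr (S *m G0 *m W *m G0^T *m S^T) <= \tr (S *m G *m W *m G^T *m S^T) /\
    (\tr (S *m G *m W *m G^T *m S^T) = \tr (S *m G0 *m W *m G0^T *m S^T) -> G = G0).
Proof.
move=> nb0 p2 hsel hcov [Wsym Wpd] S K Wc G0.
have pW : pdq W := Wpd.
have pWi := pd_inv W Wsym pW.
have uW := pd_unit _ pW.
have Kinj : forall x : 'cV_(nu+nb), K *m x = 0 -> x = 0.
  move=> x Kx; apply/matrixP => c z; rewrite (ord1 z) [RHS]mxE.
  have [j [i Lic]] := hcov c.
  have Lx : L j *m x = 0 by rewrite -(mxcolK L j) submxcol_mul Kx submxcol0.
  have [f [_ Lf]] := hsel j.
  have fic : f i = c.
    move: Lic; rewrite Lf mxE; case: eqP => // _ /eqP; rewrite eq_sym oner_eq0.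
    done.
  have := congr1 (fun M : 'M[R]_(nj j, 1) => M i ord0) Lx; rewrite Lf; rewrite [RHS]mxE mxE (bigD1 (f i)) //=.
  rewrite mxE eqxx mul1r big1 ?addr0 ?fic // => k /negbTE fk.
  by rewrite mxE fic eq_sym fk mul0r.
have Sinj : forall k (x : 'M[R]_(nb, k)), S *m x = 0 -> x = 0.
  move=> k x; rewrite /S /struct_mx mul_col_mx mul1mx => /eqP.
  by rewrite col_mx_eq0 => /andP [_ /eqP].
have Binj : forall x : 'cV_nb, (K *m S) *m x = 0 -> x = 0.
  by move=> x; rewrite -mulmxA => /Kinj /Sinj; apply.
pose M := (K *m S)^T *m invmx W *m (K *m S).
have pM : pdq M := pd_congr _ _ _ pWi Binj.
have uM := pd_unit _ pM.
have G0E : G0 = invmx M *m (K *m S)^T *m invmx W.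
  by rewrite /G0 /Wc invmxK /M !trmx_mul !mulmxA.
have hG0 : G0 *m K *m S = 1%:M.
  have -> : G0 *m K *m S = invmx M *m M by rewrite G0E /M !mulmxA.
  exact: mulVmx.
split; first exact: hG0.
move=> G hG.
pose D := G - G0.
have DB : D *m (K *m S) = 0 by rewrite /D mulmxBl !mulmxA hG hG0 subrr.
have cross : G0 *m W *m D^T = 0.
  by rewrite G0E -!mulmxA mulKmx // -trmx_mul DB trmx0 !mulmx0.
have GD : G = G0 + D by rewrite /D addrC subrK.
clearbody D.
have e : forall H : 'M[R]_(nb, \sum_(j < p) nj j),
    S *m H *m W *m H^T *m S^T = (S *m H) *m W *m (S *m H)^T.
  by move=> H; rewrite trmx_mul !mulmxA.
have cross2 : (S *m G0) *m W *m (S *m D)^T = 0.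
  have -> : (S *m G0) *m W *m (S *m D)^T = S *m (G0 *m W *m D^T) *m S^T.
    by rewrite trmx_mul !mulmxA.
  by rewrite cross mulmx0 mul0mx.
have cross3 : (S *m D) *m W *m (S *m G0)^T = 0.
  rewrite -[LHS]trmxK.
  have -> : ((S *m D) *m W *m (S *m G0)^T)^T = (S *m G0) *m W *m (S *m D)^T.
    by rewrite !trmx_mul !trmxK Wsym !mulmxA.
  by rewrite cross2 trmx0.
have key : \tr (S *m G *m W *m G^T *m S^T) =
   \tr (S *m G0 *m W *m G0^T *m S^T) + \tr ((S *m D) *m W *m (S *m D)^T).
  rewrite !e GD mulmxDr linearD /= mulmxDl.
  by rewrite mulmxDl !mulmxDr cross2 cross3 addr0 add0r mxtraceD.
have [tr0 trE] := tr_quad _ W (S *m D) pW.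
rewrite key; split; first by rewrite lerDl.
move/eqP; rewrite -subr_eq0 addrC addKr => /eqP /trE /Sinj D0.
by rewrite GD D0 addr0.
Qed.
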